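(* Let $K$ be a field and $P$, $Q$ arbitrary posets. If the $K$-algebras $FI(P)$ and $FI(Q)$ are isomorphic, then the posets $P$ and $Q$ are isomorphic.
   Context: $K$ is a field, $P$ an arbitrary poset. $I(P)$ is the set of functions $\alpha$ assigning to each pair $x\le y$ in $P$ a value $\alpha(x,y)\in K$. An element $\alpha\in I(P)$ is a finitary series if for all $x<y$ in $P$ there are only finitely many pairs $(u,v)$ with $x\le u<v\le y$ and $\alpha(u,v)\neq0$; $FI(P)$ is the set of finitary series. $FI(P)$ is an associative $K$-algebra under pointwise addition and convolution $(\alpha\beta)(x,y)=\sum_{x\le z\le y}\alpha(x,z)\beta(z,y)$. The same definitions apply to $Q$. *)

(* Defs.v *)
From HB Require Import structures.
From Stdlib Require Import List ClassicalEpsilon.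
From mathcomp Require Import all_boot all_order all_algebra.
Set Implicit Arguments. Unset Strict Implicit. Unset Printing Implicit Defensive.
Import GRing.Theory.
Local Open Scope ring_scope.

Record poset := Poset {
  pcar :> Type;
  ple : pcar -> pcar -> Prop;
  ple_refl : forall x, ple x x;
  ple_antisym : forall x y, ple x y -> ple y x -> x = y;
  ple_trans : forall x y z, ple x y -> ple y z -> ple x z }.

Definition plt (P : poset) (x y : P) : Prop := ple x y /\ x <> y.

(* Sum of a function with finite support: the common value of
   \sum_(z <- s) f z over duplicate-free lists s containing the support
   (0 by convention if the support is infinite; never used that way). *)
Definition fsum (K : fieldType) (T : Type) (f : T -> K) : K :=
  epsilon (inhabits 0) (fun c => exists s : list T,
    List.NoDup s /\ (forall z, f z <> 0 -> List.In z s) /\ c = \sum_(z <- s) f z).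

(* Elements of I(P): functions on pairs, normalised to vanish off x <= y. *)
Definition in_I (K : fieldType) (P : poset) (a : P -> P -> K) : Prop :=
  forall x y, ~ ple x y -> a x y = 0.

Definition finitary (K : fieldType) (P : poset) (a : P -> P -> K) : Prop :=
  forall x y : P, plt x y ->
    exists l : list (P * P), forall u v : P,
      ple x u -> plt u v -> ple v y -> a u v <> 0 -> List.In (u, v) l.

Definition in_FI (K : fieldType) (P : poset) (a : P -> P -> K) : Prop :=
  in_I a /\ finitary a.

Definition ser_add (K : fieldType) (P : poset) (a b : P -> P -> K) : P -> P -> K :=
  fun x y => a x y + b x y.
Definition ser_scale (K : fieldType) (P : poset) (c : K) (a : P -> P -> K) : P -> P -> K :=
  fun x y => c * a x y.
(* Convolution: (ab)(x,y) = sum_{x<=z<=y} a(x,z) b(z,y); since series vanish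
   off the order, the summand is zero unless x <= z <= y. *)
Definition ser_mul (K : fieldType) (P : poset) (a b : P -> P -> K) : P -> P -> K :=
  fun x y => fsum (fun z : P => a x z * b z y).

Definition FI_isomorphic (K : fieldType) (P Q : poset) : Prop :=
  exists phi : (P -> P -> K) -> (Q -> Q -> K),
    (forall a, in_FI a -> in_FI (phi a)) /\
    (forall a b, in_FI a -> in_FI b -> phi a = phi b -> a = b) /\
    (forall g, in_FI g -> exists2 a, in_FI a & phi a = g) /\
    (forall a b, in_FI a -> in_FI b -> phi (ser_add a b) = ser_add (phi a) (phi b)) /\
    (forall c a, in_FI a -> phi (ser_scale c a) = ser_scale c (phi a)) /\
    (forall a b, in_FI a -> in_FI b -> phi (ser_mul a b) = ser_mul (phi a) (phi b)).

Definition poset_isomorphic (P Q : poset) : Prop :=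
  exists f : P -> Q, bijective f /\ forall x y : P, ple x y <-> ple (f x) (f y).

(* Main.v *)
Require Import Defs.
From HB Require Import structures.
From Stdlib Require Import List Permutation ClassicalEpsilon Classical FunctionalExtensionality.
From mathcomp Require Import all_boot all_order all_algebra.
Set Implicit Arguments. Unset Strict Implicit. Unset Printing Implicit Defensive.
Import GRing.Theory.
Local Open Scope ring_scope.

Lemma sum_filter_nz (K : fieldType) (T : Type) (f : T -> K) (s : list T) :
  \sum_(z <- s) f z = \sum_(z <- List.filter (fun z => f z != 0) s) f z.
Proof.
elim: s => [|a s IH] //=; rewrite big_cons IH.
case: eqP => [->|_] /=; first by rewrite add0r.
by rewrite big_cons.
Qed.

Lemma sum_perm (K : fieldType) (T : Type) (f : T -> K) (s t : list T) :
  Permutation s t -> \sum_(z <- s) f z = \sum_(z <- t) f z.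
Proof.
elim => [|x l l' _ IH|x y l|l l' l'' _ IH1 _ IH2].
- by [].
- by rewrite !big_cons IH.
- by rewrite !big_cons addrCA.
- by rewrite IH1 IH2.
Qed.

Lemma fsum_eval (K : fieldType) (T : Type) (f : T -> K) (s : list T) :
  NoDup s -> (forall z, f z <> 0 -> In z s) -> fsum f = \sum_(z <- s) f z.
Proof.
move=> Hs Hsup; rewrite /fsum.
set Pr := (fun c => _).
have ex : exists c, Pr c by exists (\sum_(z <- s) f z); exists s.
have [t [Ht [Htsup ->]]] := epsilon_spec (inhabits 0) Pr ex.
rewrite (sum_filter_nz f s) (sum_filter_nz f t); apply: sum_perm.
apply: NoDup_Permutation; try by apply: NoDup_filter.
move=> z; rewrite !filter_In; split => -[_ Hz]; split => //.
  by apply: Hsup; apply/eqP.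
by apply: Htsup; apply/eqP.
Qed.

Lemma fsum0 (K : fieldType) (T : Type) (f : T -> K) :
  (forall z, f z = 0) -> fsum f = 0.
Proof.
move=> H; rewrite (@fsum_eval _ _ f [::]) ?big_nil //; first by constructor.
Qed.

Lemma fsum_nz (K : fieldType) (T : Type) (f : T -> K) :
  fsum f <> 0 -> exists z, f z <> 0.
Proof.
move=> H; apply: NNPP => Hn; apply: H; apply: fsum0 => z.
by apply: NNPP => Hz; apply: Hn; exists z.
Qed.

Lemma fsum1 (K : fieldType) (T : Type) (f : T -> K) (p : T) :
  (forall z, f z <> 0 -> z = p) -> fsum f = f p.
Proof.
move=> H; rewrite (@fsum_eval _ _ f [:: p]) ?big_cons ?big_nil ?addr0 //.
  by constructor; [by [] | constructor].
by move=> z /H ->; left.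
Qed.

Definition dl (K : fieldType) (R : poset) (p q : R) : R -> R -> K :=
  fun u v => if excluded_middle_informative (u = p /\ v = q) then 1 else 0.

Lemma dlE1 (K : fieldType) (R : poset) (p q : R) : dl K p q p q = 1.
Proof. by rewrite /dl; case: excluded_middle_informative => // -[]. Qed.

Lemma dlE0 (K : fieldType) (R : poset) (p q u v : R) :
  ~ (u = p /\ v = q) -> dl K p q u v = 0.
Proof. by rewrite /dl; case: excluded_middle_informative. Qed.

Lemma dl_nz (K : fieldType) (R : poset) (p q u v : R) :
  dl K p q u v <> 0 -> u = p /\ v = q.
Proof. by move=> H; apply: NNPP => H'; apply: H; apply: dlE0. Qed.

Lemma prod_nz (K : fieldType) (a b : K) : a * b <> 0 -> a <> 0 /\ b <> 0.
Proof. by move=> H; split => H0; apply: H; rewrite H0 ?mul0r ?mulr0. Qed.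

Lemma mul_nz (K : fieldType) (R : poset) (a b : R -> R -> K) u v :
  ser_mul a b u v <> 0 -> exists z, a u z <> 0 /\ b z v <> 0.
Proof. by move=> /fsum_nz [z /prod_nz]; exists z. Qed.

Lemma nz_le (K : fieldType) (R : poset) (a : R -> R -> K) u v :
  in_I a -> a u v <> 0 -> ple u v.
Proof. by move=> Ha H; apply: NNPP => H'; apply: H; apply: Ha. Qed.

Lemma mul_in_I (K : fieldType) (R : poset) (a b : R -> R -> K) :
  in_I a -> in_I b -> in_I (ser_mul a b).
Proof.
move=> Ha Hb u v Huv; apply: NNPP => H.
have [z [H1 H2]] := mul_nz H; apply: Huv.
exact: ple_trans (nz_le Ha H1) (nz_le Hb H2).
Qed.

Lemma mul_FI (K : fieldType) (R : poset) (a b : R -> R -> K) :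
  in_FI a -> in_FI b -> in_FI (ser_mul a b).
Proof.
move=> [Ha Fa] [Hb Fb]; split; first exact: mul_in_I.
move=> x y Hxy.
have [La HLa] := Fa x y Hxy; have [Lb HLb] := Fb x y Hxy.
exists (La ++ Lb ++ List.map (fun pq => (pq.1.1, pq.2.2)) (list_prod La Lb)).
move=> u v Hxu [Huv Huv'] Hvy /mul_nz [z [H1 H2]].
have Huz := nz_le Ha H1; have Hzv := nz_le Hb H2.
apply/in_or_app.
case: (classic (u = z)) => [Euz|Nuz].
  subst z; right; apply/in_or_app; left; exact: (HLb u v Hxu (conj Huv Huv') Hvy H2).
case: (classic (z = v)) => [Ezv|Nzv].
  subst z; left; exact: (HLa u v Hxu (conj Huv Huv') Hvy H1).
right; apply/in_or_app; right.
apply: (in_map (fun pq : (R * R) * (R * R) => (pq.1.1, pq.2.2)) _ ((u, z), (z, v))).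
apply/in_prod.
  exact: (HLa u z Hxu (conj Huz Nuz) (ple_trans Hzv Hvy) H1).
exact: (HLb z v (ple_trans Hxu Huz) (conj Hzv Nzv) Hvy H2).
Qed.

Lemma mul_dl_l (K : fieldType) (R : poset) (p : R) (a : R -> R -> K) u v :
  ser_mul (dl K p p) a u v = dl K p p u p * a p v.
Proof.
rewrite /ser_mul (@fsum1 _ _ _ p) // => z /prod_nz [/dl_nz [_ ->] _] //.
Qed.

Lemma mul_dl_r (K : fieldType) (R : poset) (q : R) (a : R -> R -> K) u v :
  ser_mul a (dl K q q) u v = a u q * dl K q q q v.
Proof.
rewrite /ser_mul (@fsum1 _ _ _ q) // => z /prod_nz [_ /dl_nz [-> _]] //.
Qed.

Lemma sandwich (K : fieldType) (R : poset) (p q : R) (a : R -> R -> K) :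
  ser_mul (ser_mul (dl K p p) a) (dl K q q) = ser_scale (a p q) (dl K p q).
Proof.
apply: functional_extensionality => u; apply: functional_extensionality => v.
rewrite mul_dl_r mul_dl_l /ser_scale.
case: (classic (u = p)) => [->|Nu]; last first.
  by rewrite (@dlE0 _ _ p p u p) ?(@dlE0 _ _ p q u v) ?mul0r ?mulr0 // => -[].
case: (classic (v = q)) => [->|Nv]; last first.
  by rewrite (@dlE0 _ _ q q q v) ?(@dlE0 _ _ p q p v) ?mulr0 // => -[].
by rewrite !dlE1 mul1r mulr1.
Qed.

Lemma mul_dl_dl (K : fieldType) (R : poset) (p : R) :
  ser_mul (dl K p p) (dl K p p) = dl K p p.
Proof.
apply: functional_extensionality => u; apply: functional_extensionality => v.
rewrite mul_dl_l.
case: (classic (u = p)) => [->|Nu]; first by rewrite dlE1 mul1r.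
by rewrite !(@dlE0 _ _ p p u) ?mul0r // => -[].
Qed.

Lemma diag_mul (K : fieldType) (R : poset) (a b : R -> R -> K) u :
  in_I a -> in_I b -> ser_mul a b u u = a u u * b u u.
Proof.
move=> Ha Hb; rewrite /ser_mul (@fsum1 _ _ _ u) // => z /prod_nz [H1 H2].
exact: ple_antisym (nz_le Hb H2) (nz_le Ha H1).
Qed.

Lemma dl_FI (K : fieldType) (R : poset) (p q : R) : ple p q -> in_FI (dl K p q).
Proof.
move=> Hpq; split.
  move=> u v Huv; apply: dlE0 => -[Eu Ev]; apply: Huv; by rewrite Eu Ev.
move=> x y _; exists [:: (p, q)] => u v _ _ _ /dl_nz [Eu Ev]; left; by rewrite Eu Ev.
Qed.

Lemma dl_neq0 (K : fieldType) (R : poset) (p q : R) : dl K p q <> (fun _ _ => 0).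
Proof.
move=> H; have := dlE1 K p q; rewrite H => /eqP; by rewrite eq_sym oner_eq0.
Qed.

Definition dedup (T : Type) (s : list T) : list T :=
  nodup (fun x y : T => excluded_middle_informative (x = y)) s.

Lemma interval_list (K : fieldType) (R : poset) (a c : R -> R -> K) (x y : R) :
  in_FI a -> in_FI c -> ple x y -> exists S : list R, NoDup S /\
   (forall z, ple z y -> a x z <> 0 -> In z S) /\
   (forall w, ple x w -> c w y <> 0 -> In w S).
Proof.
move=> [Ha Fa] [Hc Fc] Hxy.
case: (classic (x = y)) => [Exy|Nxy].
  subst y; exists [:: x]; split; first by constructor; [by []|constructor].
  split.
    move=> z Hzx /(nz_le Ha) Hxz; left; exact: ple_antisym.
  move=> w Hxw /(nz_le Hc) Hwx; left; exact: ple_antisym.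
have [La HLa] := Fa x y (conj Hxy Nxy); have [Lc HLc] := Fc x y (conj Hxy Nxy).
exists (dedup (x :: y :: List.map snd La ++ List.map fst Lc)).
split; first exact: NoDup_nodup.
split.
  move=> z Hzy Hn; apply/nodup_In.
  case: (classic (x = z)) => [->|Nxz]; first by left.
  right; right; apply/in_or_app; left.
  apply: (in_map snd La (x, z)); apply: HLa => //; first exact: ple_refl.
  by split => //; exact: nz_le Ha Hn.
move=> w Hxw Hn; apply/nodup_In.
case: (classic (w = y)) => [->|Nwy]; first by right; left.
right; right; apply/in_or_app; right.
apply: (in_map fst Lc (w, y)); apply: HLc => //; last exact: ple_refl.
by split => //; exact: nz_le Hc Hn.
Qed.

Lemma mul_assoc (K : fieldType) (R : poset) (a b c : R -> R -> K) :
  in_FI a -> in_FI b -> in_FI c ->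
  ser_mul (ser_mul a b) c = ser_mul a (ser_mul b c).
Proof.
move=> Fa Fb Fc.
have [Ha _] := Fa; have [Hb _] := Fb; have [Hc _] := Fc.
have Hab := mul_in_I Ha Hb; have Hbc := mul_in_I Hb Hc.
apply: functional_extensionality => x; apply: functional_extensionality => y.
case: (classic (ple x y)) => [Hxy|Nxy]; last first.
  by rewrite (mul_in_I Hab Hc) // (mul_in_I Ha Hbc).
have [S [NS [HS1 HS2]]] := interval_list Fa Fc Hxy.
rewrite /ser_mul.
rewrite (@fsum_eval _ _ _ S) //; last first.
  move=> w /prod_nz [H1 H2]; apply: HS2 => //; exact: nz_le Hab H1.
rewrite [in RHS](@fsum_eval _ _ _ S) //; last first.
  move=> z /prod_nz [H1 H2]; apply: HS1 => //; exact: nz_le Hbc H2.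
transitivity (\sum_(w <- S) (\sum_(z <- S) a x z * b z w) * c w y).
  apply: eq_bigr => w _.
  case: (classic (ple w y)) => [Hwy|Nwy]; last by rewrite (Hc w y Nwy) !mulr0.
  congr (_ * _); apply: fsum_eval => // z /prod_nz [H1 H2].
  apply: HS1 => //; exact: ple_trans (nz_le Hb H2) Hwy.
transitivity (\sum_(z <- S) a x z * (\sum_(w <- S) b z w * c w y)); last first.
  apply: eq_bigr => z _.
  case: (classic (ple x z)) => [Hxz|Nxz]; last by rewrite (Ha x z Nxz) !mul0r.
  congr (_ * _); symmetry; apply: fsum_eval => // w /prod_nz [H1 H2].
  apply: HS2 => //; exact: ple_trans Hxz (nz_le Hb H1).
under eq_bigr do rewrite big_distrl.
rewrite exchange_big; apply: eq_bigr => z _.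
rewrite big_distrr; apply: eq_bigr => w _ /=; by rewrite mulrA.
Qed.

Definition pb (P : Prop) : bool := if excluded_middle_informative P then true else false.
Lemma pbP (P : Prop) : pb P = true <-> P.
Proof. by rewrite /pb; case: excluded_middle_informative. Qed.

Lemma count_lt (T : Type) (a b : pred T) (s : list T) (x0 : T) :
  (forall x, a x -> b x) -> In x0 s -> b x0 -> ~~ a x0 -> (count a s < count b s)%N.
Proof.
move=> Hab; have Hs : forall t, (count a t <= count b t)%N.
  by apply: sub_count => x /Hab.
elim: s => [|y s IH] //= [->|Hin] Hb Ha.
  by rewrite Hb (negbTE Ha) add0n add1n ltnS.
by rewrite -addnS; apply: leq_add; [case Hay: (a y) => //; rewrite (Hab _ Hay) | exact: IH].
Qed.

Lemma zero_FI (K : fieldType) (R : poset) : in_FI (fun _ _ : R => (0 : K)).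
Proof. split => // x y _; by exists [::]. Qed.

Lemma mul0s (K : fieldType) (R : poset) (a : R -> R -> K) :
  ser_mul (fun _ _ => 0) a = (fun _ _ => 0).
Proof.
apply: functional_extensionality => u; apply: functional_extensionality => v.
by apply: fsum0 => z; rewrite mul0r.
Qed.

Lemma muls0 (K : fieldType) (R : poset) (a : R -> R -> K) :
  ser_mul a (fun _ _ => 0) = (fun _ _ => 0).
Proof.
apply: functional_extensionality => u; apply: functional_extensionality => v.
by apply: fsum0 => z; rewrite mulr0.
Qed.

Lemma idem_diag (K : fieldType) (R : poset) (f : R -> R -> K) :
  in_FI f -> ser_mul f f = f -> f <> (fun _ _ => 0) -> exists u, f u u = 1.
Proof.
move=> [Hf Ff] Hff Hnz.
suff [u Hu] : exists u, f u u <> 0.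
  exists u; apply: (mulfI (x := f u u)); first by apply/eqP.
  by rewrite mulr1 -(diag_mul u Hf Hf) Hff.
apply: NNPP => Hd.
have D0 : forall u, f u u = 0 by move=> u; apply: NNPP => H; apply: Hd; exists u.
apply: Hnz; apply: functional_extensionality => y; apply: functional_extensionality => z.
apply: NNPP => Hyz.
have Hle := nz_le Hf Hyz.
have Nyz : y <> z by move=> E; subst z; apply: Hyz; apply: D0.
have [L HL] := Ff y z (conj Hle Nyz).
pose m (u v : R) := count (fun p : R * R => pb (ple u p.1 /\ ple p.2 v)) L.
suff: forall n u v, ple y u -> ple v z -> f u v <> 0 -> (m u v < n)%N -> False.
  by move=> /(_ (m y z).+1 y z (ple_refl y) (ple_refl z) Hyz); apply.
elim=> [|n IH] u v Hyu Hvz Huv //.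
rewrite ltnS => Hm.
have Hf' : ser_mul f f u v <> 0 by rewrite Hff.
have [w [H1 H2]] := mul_nz Hf'.
have Huw := nz_le Hf H1; have Hwv := nz_le Hf H2.
have Nuw : u <> w by move=> E; subst w; apply: H1; apply: D0.
have Nwv : w <> v by move=> E; subst w; apply: H2; apply: D0.
have Nuv : u <> v by move=> E; subst v; apply: Nuw; exact: ple_antisym.
apply: (IH u w Hyu (ple_trans Hwv Hvz) H1).
apply: leq_trans Hm.
apply: (count_lt (x0 := (u, v))).
- move=> p /pbP [H3 H4]; apply/pbP; split => //; exact: ple_trans H4 Hwv.
- apply: HL => //; split => //; exact: ple_trans Huw Hwv.
- by apply/pbP; split => /=; exact: ple_refl.
- apply/negP => /pbP [_ /= Hvw]; apply: Nwv; exact: ple_antisym.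
Qed.

Lemma sandwich1 (K : fieldType) (R : poset) (f : R -> R -> K) (u : R) :
  f u u = 1 -> ser_mul (ser_mul (dl K u u) f) (dl K u u) = dl K u u.
Proof.
move=> H; rewrite sandwich H.
apply: functional_extensionality => p; apply: functional_extensionality => q.
by rewrite /ser_scale mul1r.
Qed.

Lemma diag_supp (K : fieldType) (R : poset) (f : R -> R -> K) (u v : R) :
  in_I f -> ser_mul (ser_mul f (dl K u u)) f = f -> v <> u -> f v v = 0.
Proof.
move=> Hf H Nvu.
have HdI : in_I (dl K u u) by case: (dl_FI K (ple_refl u)).
rewrite -H diag_mul //; last exact: mul_in_I.
by rewrite mul_dl_r (@dlE0 _ _ u u u v) ?mulr0 ?mul0r // => -[_ E]; apply: Nvu.
Qed.

Ltac fi := repeat (apply: mul_FI || apply: dl_FI || apply: ple_refl || assumption).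

Lemma order_lemma (K : fieldType) (R : poset) (p q : R) (f g m : R -> R -> K) :
  in_FI f -> in_FI g -> in_FI m ->
  ser_mul (ser_mul f (dl K p p)) f = f ->
  ser_mul (ser_mul g (dl K q q)) g = g ->
  ser_mul (ser_mul f m) g <> (fun _ _ => 0) -> ple p q.
Proof.
move=> Ff Fg Fm Hf Hg Hk; apply: NNPP => Npq; apply: Hk.
have Fk : in_FI (ser_mul (ser_mul f m) g) by fi.
have [Ik _] := Fk.
have e1 : ser_mul (ser_mul f m) g =
  ser_mul (ser_mul (ser_mul (ser_mul f (dl K p p)) f) m) (ser_mul (ser_mul g (dl K q q)) g)
  by rewrite Hf Hg.
have e2 : ser_mul (ser_mul (ser_mul (ser_mul f (dl K p p)) f) m) (ser_mul (ser_mul g (dl K q q)) g)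
  = ser_mul f (ser_mul (ser_mul (ser_mul (dl K p p) (ser_mul (ser_mul f m) g)) (dl K q q)) g).
  by rewrite !mul_assoc //; fi.
rewrite e1 e2 sandwich (Ik p q Npq).
have -> : ser_scale 0 (dl K p q) = (fun _ _ => 0).
  apply: functional_extensionality => u; apply: functional_extensionality => v.
  by rewrite /ser_scale mul0r.
by rewrite mul0s muls0.
Qed.


Theorem theorem5 (K : fieldType) (P Q : poset) :
  FI_isomorphic K P Q -> poset_isomorphic P Q.
Proof.
move=> [phi [Hfi [Hinj [Hsurj [Hadd [Hscale Hmul]]]]]].
have phi0 : phi (fun _ _ => 0) = (fun _ _ => 0).
  have := Hscale 0 _ (zero_FI K P).
  have -> : ser_scale 0 (fun _ _ : P => (0 : K)) = (fun _ _ => 0).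
    apply: functional_extensionality => u; apply: functional_extensionality => v.
    by rewrite /ser_scale mul0r.
  move=> ->; apply: functional_extensionality => u; apply: functional_extensionality => v.
  by rewrite /ser_scale mul0r.
have nz_phi : forall h, in_FI h -> h <> (fun _ _ => 0) -> phi h <> (fun _ _ => 0).
  move=> h Fh Hh E; apply: Hh; apply: Hinj => //; first exact: zero_FI.
  by rewrite E phi0.
have nz_phi' : forall h, phi h <> (fun _ _ => 0) -> h <> (fun _ _ => 0).
  by move=> h Hh E; apply: Hh; rewrite E phi0.
pose Corr x y := phi (dl K x x) y y = 1 /\
   ser_mul (ser_mul (phi (dl K x x)) (dl K y y)) (phi (dl K x x)) = phi (dl K x x) /\
   exists g, [/\ in_FI g, phi g = dl K y y, ser_mul (ser_mul g (dl K x x)) g = g & g x x = 1].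
have FE : forall x : P, in_FI (dl K x x) by move=> x; fi.
have FF : forall y : Q, in_FI (dl K y y) by move=> y; fi.
have idem_f : forall x, ser_mul (phi (dl K x x)) (phi (dl K x x)) = phi (dl K x x).
  by move=> x; rewrite -Hmul // mul_dl_dl.
have nz_f : forall x, phi (dl K x x) <> (fun _ _ => 0).
  move=> x; apply: nz_phi => //; exact: dl_neq0.
have key : forall x y g, in_FI g -> phi g = dl K y y -> g x x = 1 -> Corr x y.
  move=> x y g Fg Hg Hgx.
  have E1 := sandwich1 Hgx.
  have E2 : ser_mul (ser_mul (phi (dl K x x)) (dl K y y)) (phi (dl K x x)) = phi (dl K x x).
    by rewrite -Hg -!Hmul //; [rewrite E1 | fi].
  have Ff := Hfi _ (FE x).
  have [y' Hy'] := idem_diag Ff (idem_f x) (nz_f x).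
  have Eyy : y' = y.
    apply: NNPP => N; have := diag_supp (proj1 Ff) E2 N; rewrite Hy' => /eqP.
    by rewrite oner_eq0.
  subst y'.
  split => //; split => //; exists g; split => //.
  apply: Hinj; [fi | done | ].
  by rewrite !Hmul //; [rewrite Hg; exact: sandwich1 | fi].
have gprops : forall y g, in_FI g -> phi g = dl K y y ->
    ser_mul g g = g /\ g <> (fun _ _ => 0).
  move=> y g Fg Hg; split.
    by apply: Hinj => //; [fi | rewrite Hmul // Hg mul_dl_dl].
  apply: nz_phi'; rewrite Hg; exact: dl_neq0.
have fwd : forall x, exists y, Corr x y.
  move=> x.
  have Ff := Hfi _ (FE x).
  have [y Hy] := idem_diag Ff (idem_f x) (nz_f x).
  have Hyy := sandwich1 Hy.
  have [g Fg Hg] := Hsurj _ (FF y).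
  have gEg : ser_mul (ser_mul g (dl K x x)) g = g.
    by apply: Hinj; [fi | done | rewrite !Hmul //; [rewrite Hg | fi]].
  have [gg gnz] := gprops y g Fg Hg.
  have [u Hu] := idem_diag Fg gg gnz.
  have Eux : u = x.
    apply: NNPP => N; have := diag_supp (proj1 Fg) gEg N; rewrite Hu => /eqP.
    by rewrite oner_eq0.
  subst u; exists y; exact: key Fg Hg Hu.
have bwd : forall y, exists x, Corr x y.
  move=> y; have [g Fg Hg] := Hsurj _ (FF y).
  have [gg gnz] := gprops y g Fg Hg.
  have [x Hx] := idem_diag Fg gg gnz.
  exists x; exact: key Fg Hg Hx.
have U1 : forall x y y', Corr x y -> Corr x y' -> y = y'.
  move=> x y y' [_ [H _]] [H' _].
  apply: NNPP => N; have := diag_supp (proj1 (Hfi _ (FE x))) H (nesym N).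
  by rewrite H' => /eqP; rewrite oner_eq0.
have U2 : forall x x' y, Corr x y -> Corr x' y -> x = x'.
  move=> x x' y [_ [_ [g [Fg Hg gEg _]]]] [_ [_ [g' [Fg' Hg' _ Hg'x]]]].
  have E : g = g' by apply: Hinj => //; rewrite Hg Hg'.
  subst g'.
  apply: NNPP => N; have := diag_supp (proj1 Fg) gEg (nesym N).
  by rewrite Hg'x => /eqP; rewrite oner_eq0.
pose sigma x := proj1_sig (constructive_indefinite_description _ (fwd x)).
pose tau y := proj1_sig (constructive_indefinite_description _ (bwd y)).
have Cs : forall x, Corr x (sigma x)
  by move=> x; exact: proj2_sig (constructive_indefinite_description _ (fwd x)).
have Ct : forall y, Corr (tau y) y
  by move=> y; exact: proj2_sig (constructive_indefinite_description _ (bwd y)).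
exists sigma; split.
  exists tau.
    move=> x; apply: (U2 _ _ (sigma x)); [exact: Ct | exact: Cs].
  move=> y; apply: (U1 (tau y)); [exact: Cs | exact: Ct].
move=> x x'; split => Hle.
- have [_ [Hf _]] := Cs x; have [_ [Hf' _]] := Cs x'.
  have Fa := dl_FI K Hle.
  apply: (order_lemma (Hfi _ (FE x)) (Hfi _ (FE x')) (Hfi _ Fa) Hf Hf').
  rewrite -!Hmul //; last by fi.
  apply: nz_phi; first by fi.
  rewrite sandwich dlE1.
  have -> : ser_scale 1 (dl K x x') = dl K x x'.
    apply: functional_extensionality => u; apply: functional_extensionality => v.
    by rewrite /ser_scale mul1r.
  exact: dl_neq0.
- have [_ [_ [g [Fg Hg gEg _]]]] := Cs x.
  have [_ [_ [g' [Fg' Hg' gEg' _]]]] := Cs x'.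
  have Fc := dl_FI K Hle.
  have [a Fa Ha] := Hsurj _ Fc.
  apply: (order_lemma (m := a) Fg Fg' Fa gEg gEg').
  apply: nz_phi'; rewrite !Hmul //; last by fi.
  rewrite Hg Hg' Ha sandwich dlE1.
  have -> : ser_scale 1 (dl K (sigma x) (sigma x')) = dl K (sigma x) (sigma x').
    apply: functional_extensionality => u; apply: functional_extensionality => v.
    by rewrite /ser_scale mul1r.
  exact: dl_neq0.
Qed.
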